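(* Let $R,R'$ be parallelograms in $\mathbb{R}^2$ each having a pair of vertical edges, such that $I(R)=I(R')$, $U(R)\cap U(R')\neq\emptyset$, $R\cap R'\neq\emptyset$, and $H(R)\le H(R')$. Then $R\subseteq 7R'$. Moreover, if $7H(R)\le H(R')$, then $7R\subseteq 7R'$.
   Context: For a parallelogram $R$ with two vertical edges: the height $H(R)$ is the common length of the vertical edges; the shadow $I(R)$ is the projection of $R$ onto the $x$-axis; the central line segment is the segment joining the midpoints of the vertical edges; $U(R)$ is the set of slopes of (non-vertical) lines intersecting both vertical edges of $R$. For $C>0$, $CR$ denotes the parallelogram with the same central line segment as $R$ and height $C\,H(R)$. *)

(* Defs.v *)
From Stdlib Require Import Reals.
Open Scope R_scope.

(* A parallelogram with two vertical edges, parametrized by: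
   its shadow [pa, pb] (pa < pb), the central line y = slope * x + icpt
   (the line through the midpoints of the two vertical edges), and its
   height ht > 0 (common length of the vertical edges).  Its vertices are
   (pa, slope*pa+icpt +- ht/2) and (pb, slope*pb+icpt +- ht/2). *)
Record para := Para {
  pa : R; pb : R; slope : R; icpt : R; ht : R;
  pab : pa < pb;
  pht : 0 < ht
}.

Definition region_h (P : para) (h : R) (p : R * R) : Prop :=
  pa P <= fst p <= pb P /\
  Rabs (snd p - (slope P * fst p + icpt P)) <= h / 2.

Definition region (P : para) : R * R -> Prop := region_h P (ht P).

(* C R : same central line segment, height C * H(R). *)
Definition scaled (C : R) (P : para) : R * R -> Prop := region_h P (C * ht P).

Definition H (P : para) : R := ht P.

Definition shadow (P : para) (x : R) : Prop := exists y, region P (x, y).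

Definition left_edge (P : para) (p : R * R) : Prop :=
  fst p = pa P /\ Rabs (snd p - (slope P * pa P + icpt P)) <= ht P / 2.
Definition right_edge (P : para) (p : R * R) : Prop :=
  fst p = pb P /\ Rabs (snd p - (slope P * pb P + icpt P)) <= ht P / 2.

Definition U (P : para) (s : R) : Prop :=
  exists t : R,
    (exists p, left_edge P p /\ snd p = s * fst p + t) /\
    (exists q, right_edge P q /\ snd q = s * fst q + t).

(* Main.v *)
Require Import Defs.
From Stdlib Require Import Reals Lra Psatz.
Open Scope R_scope.

Lemma absI (x K : R) : Rabs x <= K <-> -K <= x <= K.
Proof. unfold Rabs; destruct (Rcase_abs x); split; intros; lra. Qed.

Lemma interp (a b x m c K : R) : a < b -> a <= x <= b ->
  -K <= m*a+c <= K -> -K <= m*b+c <= K -> -K <= m*x+c <= K.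
Proof.
  intros Hab Hx [H1 H2] [H3 H4].
  assert (E : (b-a)*(m*x+c) = (b-x)*(m*a+c) + (x-a)*(m*b+c)) by ring.
  split.
  - assert ((b-a)*(m*x+c + K) >= 0) by nra. nra.
  - assert ((b-a)*(m*x+c - K) <= 0) by nra. nra.
Qed.

Lemma shadowI (P : para) x : shadow P x <-> pa P <= x <= pb P.
Proof.
  split.
  - intros [y [Hx _]]; exact Hx.
  - intros Hx. exists (slope P * x + icpt P). split; [exact Hx|].
    simpl. replace (slope P * x + icpt P - (slope P * x + icpt P)) with 0 by ring.
    rewrite Rabs_R0. pose proof (pht P); lra.
Qed.

Theorem lemma3p1 (P P' : para) :
  (forall x, shadow P x <-> shadow P' x) ->
  (exists s, U P s /\ U P' s) ->
  (exists p, region P p /\ region P' p) ->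
  H P <= H P' ->
  (forall p, region P p -> scaled 7 P' p) /\
  (7 * H P <= H P' -> forall p, scaled 7 P p -> scaled 7 P' p).
Proof.
  intros Hsh [s [[t [[p1 [[Hp1a Hp1b] Hp1c]] [q1 [[Hq1a Hq1b] Hq1c]]]]
                 [t' [[p2 [[Hp2a Hp2b] Hp2c]] [q2 [[Hq2a Hq2b] Hq2c]]]]]]
         [[x0 y0] [[Hx0 Hy0] [Hx0' Hy0']]] Hh.
  unfold H in *.
  pose proof (pab P) as Pab. pose proof (pab P') as Pab'.
  pose proof (pht P). pose proof (pht P').
  assert (Ea : pa P = pa P').
  { assert (A1 := proj1 (shadowI P' (pa P)) (proj1 (Hsh _) (proj2 (shadowI P _) (conj (Rle_refl _) (Rlt_le _ _ Pab))))).
    assert (A2 := proj1 (shadowI P (pa P')) (proj2 (Hsh _) (proj2 (shadowI P' _) (conj (Rle_refl _) (Rlt_le _ _ Pab'))))).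
    lra. }
  assert (Eb : pb P = pb P').
  { assert (A1 := proj1 (shadowI P' (pb P)) (proj1 (Hsh _) (proj2 (shadowI P _) (conj (Rlt_le _ _ Pab) (Rle_refl _))))).
    assert (A2 := proj1 (shadowI P (pb P')) (proj2 (Hsh _) (proj2 (shadowI P' _) (conj (Rlt_le _ _ Pab') (Rle_refl _))))).
    lra. }
  destruct p1 as [u1 v1], q1 as [u2 v2], p2 as [u3 v3], q2 as [u4 v4].
  simpl in *. subst.
  apply absI in Hp1b, Hq1b, Hp2b, Hq2b, Hy0, Hy0'. simpl in *.
  set (a := pa P') in *. set (b := pb P') in *.
  set (h := ht P) in *. set (h' := ht P') in *.
  set (m := slope P) in *. set (c := icpt P) in *.
  set (m' := slope P') in *. set (c' := icpt P') in *.
  assert (HD : forall x, a <= x <= b ->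
     -((h+h')/2) <= (m-m')*x + (c-c'-(t-t')) <= (h+h')/2).
  { intros x Hx. apply (interp a b); [lra|exact Hx|rewrite Ea in *; split; lra|rewrite Eb in *; split; lra]. }
  assert (Ht : Rabs (t - t') <= h + h').
  { apply absI. specialize (HD x0 Hx0'). lra. }
  apply absI in Ht.
  assert (Hd : forall x, a <= x <= b -> -(3*(h+h')/2) <= (m*x+c) - (m'*x+c') <= 3*(h+h')/2).
  { intros x Hx. specialize (HD x Hx). lra. }
  split.
  - intros [x y] [Hx Hy]. simpl in *. rewrite Ea, Eb in Hx. split; [exact Hx|]. fold h m c h' m' c'.
    apply absI in Hy. apply absI. specialize (Hd x Hx). unfold h, m, c, h', m', c' in *. simpl; lra.
  - intros H7 [x y] [Hx Hy]. simpl in *. rewrite Ea, Eb in Hx. split; [exact Hx|]. fold h m c h' m' c'.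
    apply absI in Hy. apply absI. specialize (Hd x Hx). unfold h, m, c, h', m', c' in *. simpl; lra.
Qed.
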